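(* Let $3\le q<\infty$ and let $G=(V,E,F)$ be a $q$-face regular plane tessellation with non-positive vertex curvature, $v_0\in V$, and let $\kappa_k$, $N$, $b_l$ be as in the context; let $k\ge 1$. Then: (a) $b_0-\kappa_k\ge1$. (b) $b_{N-1}-\kappa_k\ge1$ if $N\ge2$. (c) $b_0-\kappa_k\ge2$ if $q=3$ or $q=4$. (d) Let $n,N\ge1$ and $1\le k\le\min\{n,N\}$, and assume that real numbers $\gamma_i\ge0$ are monotone non-decreasing for $n-k+1\le i\le n-1$. Then $\sum_{l=1}^{k-1}(b_l-\kappa_{n-l})\gamma_{n-l}\ge0$.
   Context: A $q$-face regular plane tessellation is a locally tessellating planar graph (simple planar graph — no loops, multiple edges or degree-one vertices, finite degrees, locally finitely many faces — in which every edge lies in exactly two faces, two faces are disjoint or share exactly a vertex or an edge path, and every face is a closed topological disc, complement of an open disc, or closed half plane with boundary a path) in which every face has degree $q$. Vertex curvature: $\kappa(v)=1-\frac{|v|}2+\sum_{f\ni v}\frac1{|f|}$. With $d$ the combinatorial distance, $S_k=\{v:d(v_0,v)=k\}$, $\sigma_k=|S_k|$ and $\kappa_k=\frac{2q}{q-2}\cdot\frac1{\sigma_k}\sum_{v\in S_k}\kappa(v)$. $N=\frac{q-2}2$ if $q$ is even and $N=q-2$ if $q$ is odd. For $0\le l\le N-1$, $b_l=\frac4{q-2}$ except $b_l=\frac4{q-2}-2$ when $q$ is odd and $l=\frac{N-1}2$. *)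

(* Defs.v *)
From mathcomp Require Import all_boot all_order all_algebra.
Set Implicit Arguments. Unset Strict Implicit. Unset Printing Implicit Defensive.
Import Order.TTheory GRing.Theory Num.Theory.

(* A (combinatorial) plane graph with faces:
   - vertices : an eqType V; [nbrs v] = the (finite, duplicate-free) list of
     neighbours of v (finite degrees);
   - faces : an eqType Fc; [fbd f] = the boundary of face f listed as a
     cyclic sequence of vertices;
   - [vfaces v] = the (finite) duplicate-free list of faces containing v
     (locally finitely many faces). *)

Section Tess.
Variables (V Fc : eqType) (nbrs : V -> seq V) (fbd : Fc -> seq V)
  (vfaces : V -> seq Fc).

Definition adj (u w : V) : bool := w \in nbrs u.

Definition face_edge (f : Fc) (u w : V) : bool :=
  ((u \in fbd f) && (w == next (fbd f) u)) ||
  ((w \in fbd f) && (u == next (fbd f) w)).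

(* Two distinct faces are disjoint, or share exactly one vertex, or share
   exactly an edge path (a proper arc of both boundary cycles). *)
Definition faces_meet_well (f g : Fc) : Prop :=
  exists s : seq V,
    (forall x, (x \in s) = (x \in fbd f) && (x \in fbd g)) /\
    (size s <= 1 \/
     [/\ size s < size (fbd f), size s < size (fbd g),
         (exists i, take (size s) (rot i (fbd f)) = s) &
         (exists j, take (size s) (rot j (fbd g)) = s \/
                    take (size s) (rot j (fbd g)) = rev s)])%N.

Fixpoint ball (v0 : V) (k : nat) : seq V :=
  match k with
  | 0 => [:: v0]
  | k'.+1 => undup (ball v0 k' ++ flatten (map nbrs (ball v0 k')))
  end.

Definition sphere (v0 : V) (k : nat) : seq V :=
  [seq v <- ball v0 k | if k is k'.+1 then v \notin ball v0 k' else true].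

Record q_face_regular_tessellation (q : nat) : Prop := {
  tess_simple : forall v, uniq (nbrs v) /\ v \notin nbrs v;
  tess_sym : forall u w, adj u w = adj w u;
  tess_nodeg1 : forall v, size (nbrs v) != 1%N;
  tess_face : forall f, [/\ uniq (fbd f), size (fbd f) = q & cycle adj (fbd f)];
  tess_vfaces : forall v, uniq (vfaces v) /\ forall f, (f \in vfaces v) = (v \in fbd f);
  tess_edge2 : forall u w, adj u w -> count (fun f => face_edge f u w) (vfaces u) = 2%N;
  tess_meet : forall f g, f <> g -> faces_meet_well f g;
  tess_conn : forall u w, exists k, w \in ball u k;
  tess_inf : forall s : seq V, exists v, v \notin s }.

Variable R : realFieldType.
Local Open Scope ring_scope.

Definition kappa (v : V) : R :=
  1 - (size (nbrs v))%:R / 2 + \sum_(f <- vfaces v) ((size (fbd f))%:R)^-1.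

Definition kappa_sph (q : nat) (v0 : V) (k : nat) : R :=
  (2 * q%:R / (q%:R - 2)) * ((size (sphere v0 k))%:R)^-1 *
  \sum_(v <- sphere v0 k) kappa v.

End Tess.

Definition Nq (q : nat) : nat := if odd q then (q - 2)%N else ((q - 2) %/ 2)%N.

Definition bq (R : realFieldType) (q l : nat) : R :=
  (4 / (q%:R - 2) - (if odd q && (l == ((Nq q - 1) %/ 2)%N) then 2 else 0))%R.

(* Main.v *)
Require Import Defs.
From mathcomp Require Import all_boot all_order all_algebra.
From mathcomp Require Import ring lra zify.
Import Order.TTheory GRing.Theory Num.Theory.

Lemma next_neq_prev (T : eqType) (p : seq T) x :
  uniq p -> (2 < size p)%N -> x \in p -> next p x != prev p x.
Proof.
move=> up sp xp; case: (rot_to xp) => i s Hs.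
rewrite -(next_rot i up) -(prev_rot i up) Hs.
have : uniq (x :: s) by rewrite -Hs rot_uniq.
have : size (x :: s) = size p by rewrite -Hs size_rot.
case: s {Hs} => [|a [|b t]] /=; first by move=> E; rewrite -E in sp.
  by move=> E; rewrite -E in sp.
rewrite !inE !eqxx /= => _ /andP[] /norP[xa /norP[xb xt]] /andP[/norP[ab at_] _].
rewrite (negbTE xa) (negbTE xb).
have -> : prev_at x x b t = last b t.
  clear -xt; elim: t b xt => [|c t IH] b /=; first by rewrite eqxx.
  by rewrite inE negb_or => /andP[/negbTE -> /IH].
apply/eqP => E; have : last b t \in b :: t by exact: mem_last.
by rewrite -E inE (negbTE ab) (negbTE at_).
Qed.

Lemma face_edge_eq (V Fc : eqType) (fbd : Fc -> seq V) f v w :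
  uniq (fbd f) -> v \in fbd f ->
  face_edge fbd f v w = (w == next (fbd f) v) || (w == prev (fbd f) v).
Proof.
move=> up vp; rewrite /face_edge vp /=; congr orb.
apply/andP/eqP => [[wp /eqP ->]|->]; first by rewrite prev_next.
by rewrite mem_prev vp next_prev.
Qed.

Lemma count_sum (T : eqType) (P : pred T) s : count P s = \sum_(x <- s) (P x : nat).
Proof. by elim: s => [|y s IH]; rewrite ?big_nil ?big_cons //= IH. Qed.

Lemma sum_const2 (T : Type) (s : seq T) : \sum_(x <- s) 2 = (2 * size s)%N.
Proof. by elim: s => [|y s IH]; rewrite ?big_nil ?big_cons //= IH mulnS. Qed.

Lemma deg_faces (V Fc : eqType) (nbrs : V -> seq V) (fbd : Fc -> seq V)
  (vfaces : V -> seq Fc) q :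
  (3 <= q)%N -> q_face_regular_tessellation nbrs fbd vfaces q ->
  forall v, size (vfaces v) = size (nbrs v).
Proof.
move=> q3 T v.
have E1 : \sum_(w <- nbrs v) count (fun f => face_edge fbd f v w) (vfaces v)
          = (2 * size (nbrs v))%N.
  rewrite -sum_const2; apply: eq_big_seq => w wn.
  by apply: (tess_edge2 T).
have E2 : \sum_(w <- nbrs v) count (fun f => face_edge fbd f v w) (vfaces v)
          = (2 * size (vfaces v))%N.
  under eq_bigr do rewrite count_sum.
  rewrite exchange_big /= -sum_const2; apply: eq_big_seq => f fv.
  rewrite -count_sum.
  have vp : v \in fbd f by rewrite -(proj2 (tess_vfaces T v)).
  have [up sz cy] := tess_face T f.
  rewrite (eq_count (a2 := predU (pred1 (next (fbd f) v)) (pred1 (prev (fbd f) v))));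
    last by move=> w; rewrite face_edge_eq.
  have ne := @next_neq_prev _ (fbd f) v up (leq_trans q3 (eq_leq (esym sz))) vp.
  have := count_predUI (pred1 (next (fbd f) v)) (pred1 (prev (fbd f) v)) (nbrs v).
  rewrite (eq_count (a1 := predI _ _) (a2 := pred0)); last first.
    by move=> w /=; apply/andP => -[/eqP -> /eqP E]; rewrite E eqxx in ne.
  rewrite count_pred0 addn0 => ->.
  have [un _] := tess_simple T v.
  rewrite !count_uniq_mem //.
  have -> : next (fbd f) v \in nbrs v by exact: (next_cycle cy vp).
  have -> : prev (fbd f) v \in nbrs v.
    have := prev_cycle cy vp; rewrite /adj => H.
    by move: (tess_sym T (prev (fbd f) v) v); rewrite /adj H => <-.
  by [].
by apply/eqP; rewrite -(eqn_pmul2l (isT : (0 < 2)%N)) -E1 -E2.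
Qed.
Lemma mem_ballS (V : eqType) (nbrs : V -> seq V) v0 j x :
  (x \in ball nbrs v0 j.+1) =
  (x \in ball nbrs v0 j) || has (fun y => x \in nbrs y) (ball nbrs v0 j).
Proof.
rewrite /= mem_undup mem_cat; congr orb.
apply/flatten_mapP/hasP => -[y ? ?]; by exists y.
Qed.

Lemma ball_mono (V : eqType) (nbrs : V -> seq V) v0 j k :
  (j <= k)%N -> {subset ball nbrs v0 j <= ball nbrs v0 k}.
Proof.
move=> /subnK <-; elim: (k - j)%N => [|i IH] x // H.
by rewrite mem_ballS IH.
Qed.

Lemma sphere_nonempty (V Fc : eqType) (nbrs : V -> seq V) (fbd : Fc -> seq V)
  (vfaces : V -> seq Fc) q v0 k :
  q_face_regular_tessellation nbrs fbd vfaces q ->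
  (0 < size (sphere nbrs v0 k))%N.
Proof.
move=> T; case: k => [|k] //; rewrite /sphere lt0n size_eq0 -has_filter.
apply: contraT => /hasPn H.
have sub : {subset ball nbrs v0 k.+1 <= ball nbrs v0 k}.
  by move=> x /H /negPn.
have all_in : forall j, {subset ball nbrs v0 j <= ball nbrs v0 k}.
  move=> j; case: (leqP j k) => [/ball_mono //|/ltnW /subnK <-].
  elim: (j - k)%N => [|i IH] x //.
  rewrite addSn mem_ballS => /orP[/IH //|/hasP[y /IH yb xy]].
  by apply: sub; rewrite mem_ballS; apply/orP; right; apply/hasP; exists y.
have [w wn] := tess_inf T (ball nbrs v0 k).
have [j wj] := tess_conn T v0 w.
by move: wn; rewrite (all_in j w wj).
Qed.
Local Open Scope ring_scope.
Lemma sumr_constR (R : realFieldType) (T : Type) (s : seq T) (c : R) :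
  \sum_(x <- s) c = (size s)%:R * c.
Proof. by elim: s => [|y s IH]; rewrite ?big_nil ?big_cons ?mul0r //= IH -add1n natrD mulrDl mul1r. Qed.

Lemma kap_le (R : realFieldType) (V Fc : eqType) (nbrs : V -> seq V) (fbd : Fc -> seq V)
  (vfaces : V -> seq Fc) q v0 k (B : R) :
  (forall v, (2 * q%:R / (q%:R - 2)) * kappa nbrs fbd vfaces R v <= B) ->
  (0 < size (sphere nbrs v0 k))%N ->
  kappa_sph nbrs fbd vfaces R q v0 k <= B.
Proof.
move=> H sp; rewrite /kappa_sph mulrAC mulr_sumr.
set s := sphere nbrs v0 k.
have s0 : 0 < (size s)%:R :> R by rewrite ltr0n.
rewrite ler_pdivrMr //.
rewrite [B * _]mulrC -sumr_constR.
by apply: ler_sum => v _.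
Qed.

Lemma m_case q l : (3 <= q)%N -> odd q && (l == ((Nq q - 1) %/ 2)%N) -> q = (2 * l + 3)%N.
Proof.
move=> q3 /andP[oq /eqP ->]; rewrite /Nq oq.
have : (q %% 2 = 1)%N by rewrite modn2 oq.
lia.
Qed.

Lemma m_case_conv q l : q = (2 * l + 3)%N -> odd q && (l == ((Nq q - 1) %/ 2)%N).
Proof.
move=> ->; have oq : odd (2 * l + 3) by rewrite oddD oddM /=.
rewrite oq /= /Nq oq; apply/eqP; lia.
Qed.
Lemma ckappa_eq (R : realFieldType) (V Fc : eqType) (nbrs : V -> seq V) (fbd : Fc -> seq V)
  (vfaces : V -> seq Fc) q v :
  (3 <= q)%N -> (forall f, size (fbd f) = q) -> size (vfaces v) = size (nbrs v) ->
  (2 * q%:R / (q%:R - 2)) * kappa nbrs fbd vfaces R v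
    = 2 * q%:R / (q%:R - 2) - (size (nbrs v))%:R.
Proof.
move=> q3 sz E; rewrite /kappa.
under eq_bigr do rewrite sz.
rewrite sumr_constR E.
have q0 : (q%:R : R) != 0 by rewrite pnatr_eq0 -lt0n (leq_trans _ q3).
have q2 : (q%:R - 2 : R) != 0.
  rewrite subr_eq0; apply/negP => /eqP H.
  have : (q%:R : R) = 2%:R by rewrite H.
  by move/eqP; rewrite eqr_nat => /eqP H2; rewrite H2 in q3.
field; by rewrite q0 q2.
Qed.

Theorem lemma6 (R : realFieldType) (q : nat) (V Fc : eqType)
    (nbrs : V -> seq V) (fbd : Fc -> seq V) (vfaces : V -> seq Fc) (v0 : V) :
  (3 <= q)%N ->
  q_face_regular_tessellation nbrs fbd vfaces q ->
  (forall v, kappa nbrs fbd vfaces R v <= 0) ->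
  let kap := kappa_sph nbrs fbd vfaces R q v0 in
  let b := bq R q in
  let N := Nq q in
  [/\ (* (a) *)
      (forall k, (1 <= k)%N -> 1 <= b 0%N - kap k),
      (* (b) *)
      (forall k, (1 <= k)%N -> (2 <= N)%N -> 1 <= b (N - 1)%N - kap k),
      (* (c) *)
      (forall k, (1 <= k)%N -> (q = 3%N \/ q = 4%N) -> 2 <= b 0%N - kap k) &
      (* (d) *)
      (forall (n k : nat) (gamma : nat -> R),
         (1 <= n)%N -> (1 <= N)%N -> (1 <= k)%N -> (k <= minn n N)%N ->
         (forall i, (n - k + 1 <= i <= n - 1)%N -> 0 <= gamma i) ->
         (forall i, (n - k + 1 <= i)%N -> (i.+1 <= n - 1)%N -> gamma i <= gamma i.+1) ->
         0 <= \sum_(1 <= l < k) (b l - kap (n - l)%N) * gamma (n - l)%N)].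
Proof.
move=> q3 T Hk kap b N.
have q3R : 3 <= q%:R :> R by rewrite (ler_nat R 3 q).
have q2 : q%:R - 2 != 0 :> R by rewrite subr_eq0; apply/negP => /eqP E; lra.
set c : R := 2 * q%:R / (q%:R - 2).
have cE : c = 2 + 4 / (q%:R - 2) by rewrite /c; field.
have cq : c * (q%:R - 2) = 2 * q%:R by rewrite /c; field.
have c2 : 2 < c by rewrite cE ltrDl divr_gt0 //; lra.
have sz f : size (fbd f) = q by have [] := tess_face T f.
have ck v : c * kappa nbrs fbd vfaces R v = c - (size (nbrs v))%:R.
  by rewrite /c; apply: ckappa_eq => //; exact: deg_faces q3 T v.
have dge v : c <= (size (nbrs v))%:R.
  have c0 : 0 < c by lra.
  have := Hk v; rewrite -(pmulr_rle0 _ c0) ck; lra.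
have d3 v : (3 <= size (nbrs v))%N.
  rewrite -(ltr_nat R); have := dge v; lra.
have kle0 k : kap k <= 0.
  rewrite /kap; apply: kap_le; last exact: sphere_nonempty T; move=> v; rewrite ck; have := dge v; lra.
have klec3 k : kap k <= c - 3.
  rewrite /kap; apply: kap_le; last exact: sphere_nonempty T; move=> v; rewrite ck.
  have := d3 v; rewrite -(ler_nat R) => H; lra.
have klec4 k : q = 5%N -> kap k <= c - 4.
  move=> q5; rewrite /kap; apply: kap_le; last exact: sphere_nonempty T; move=> v; rewrite ck.
  have c3 : 3 < c by move: cq; rewrite q5; lra.
  have : (3 < size (nbrs v))%N by rewrite -(ltr_nat R); have := dge v; lra.
  rewrite -(ler_nat R 4) => H; lra.
have bE l : b l = c - 2 - (if odd q && (l == ((N - 1) %/ 2)%N) then 2 else 0).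
  by rewrite /b /bq cE /N; case: ifP => _; lra.
split.
- move=> k _; rewrite bE; case: ifP => [/(@m_case q _ q3) qE|_]; last first.
    by have := klec3 k; lra.
  have c6 : c = 6 by move: cq; rewrite qE; lra.
  by have := kle0 k; lra.
- move=> k _ N2; rewrite bE; case: ifP => [/(@m_case q _ q3) qE|_]; last first.
    by have := klec3 k; lra.
  have oq : odd q by rewrite qE oddD oddM.
  by move: qE N2; rewrite /N /Nq oq; lia.
- move=> k _ q34; rewrite bE.
  have := kle0 k.
  case: q34 => qE; rewrite qE /=.
    have c6 : c = 6 by move: cq; rewrite qE; lra.
    rewrite c6 /N qE /Nq /=; lra.
  have c4 : c = 4 by move: cq; rewrite qE; lra.
  rewrite c4; lra.
move=> n k gamma n1 N1 k1 kmin gnn gmono.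
have kn : (k <= n)%N by move: kmin; rewrite leq_min => /andP[].
set mm := ((N - 1) %/ 2)%N.
set Tm := fun l => (b l - kap (n - l)%N) * gamma (n - l)%N.
have gl l : (1 <= l < k)%N -> 0 <= gamma (n - l)%N.
  by move=> /andP[? ?]; apply: gnn; apply/andP; split; lia.
have al1 l : ~~ (odd q && (l == mm)) -> 1 <= b l - kap (n - l)%N.
  by move=> H; rewrite bE (negbTE H); have := klec3 (n - l)%N; lra.
have am l : -1 <= b l - kap (n - l)%N.
  by rewrite bE; have := klec3 (n - l)%N; case: ifP => _; lra.
have a5 l : q = 5%N -> 0 <= b l - kap (n - l)%N.
  by move=> q5; rewrite bE; have := klec4 (n - l)%N q5; case: ifP => _; lra.
have Tge0 l : (1 <= l < k)%N -> ~~ (odd q && (l == mm)) || (q == 5)%N -> 0 <= Tm l.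
  move=> lk /orP[H|/eqP q5]; apply: mulr_ge0; try exact: gl.
    by have := al1 l H; lra.
  exact: a5.
have Sge0 a e : (1 <= a)%N -> (e <= k)%N -> (forall l, (a <= l < e)%N -> l != mm) ->
    0 <= \sum_(a <= l < e) Tm l.
  move=> a1 ek H; rewrite big_nat; apply: sumr_ge0 => l /andP[al le].
  apply: Tge0; first by apply/andP; split; lia.
  by rewrite (negbTE (H l _)) ?andbF //; apply/andP.
case: (boolP [&& odd q, (mm < k)%N & (2 <= mm)%N]) => [/and3P[oq mk m2]|Hn].
  have h1 : (1 <= mm.-1)%N by lia.
  have h2 : (mm.-1 <= k)%N by lia.
  rewrite (big_cat_nat h1 h2) /=.
  rewrite [\sum_(mm.-1 <= _ < k) _]big_ltn; last by lia.
  have -> : (mm.-1).+1 = mm by lia.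
  rewrite [\sum_(mm <= _ < k) _]big_ltn; last by lia.
  have S1 := Sge0 1%N mm.-1 (leqnn 1) ltac:(lia) ltac:(move=> l /andP[? ?]; apply/eqP; lia).
  have S2 := Sge0 mm.+1 k ltac:(lia) ltac:(lia) ltac:(move=> l /andP[? ?]; apply/eqP; lia).
  have g1 : 0 <= gamma (n - mm)%N by apply: gl; apply/andP; split; lia.
  have g2 : 0 <= gamma (n - mm.-1)%N by apply: gl; apply/andP; split; lia.
  have gm : gamma (n - mm)%N <= gamma (n - mm.-1)%N.
    have -> : (n - mm.-1 = (n - mm).+1)%N by lia.
    by apply: gmono; lia.
  have a1 := al1 mm.-1 ltac:(rewrite negb_and; apply/orP; right; apply/eqP; lia).
  have a2 := am mm.
  rewrite /Tm.
  set A1 := b mm.-1 - _ in a1 *; set A2 := b mm - _ in a2 *.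
  set S1' := \sum_(_ <= _ < _) _ in S1 *; set S2' := \sum_(_ <= _ < _) _ in S2 *.
  nra.
rewrite big_nat; apply: sumr_ge0 => l /andP[l1 lk].
apply: Tge0; first by apply/andP.
case: (boolP (odd q && (l == mm))) => [H|//] /=.
have qE := @m_case q l q3 H.
move/andP: H => [oq /eqP lm].
move: Hn; rewrite oq /= -lm lk /= -ltnNge => l2.
by apply/eqP; lia.
Qed.
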